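(* Let $\mathcal{G}=(\mathcal{V},\mathcal{E})$ be a directed graph with terminals $s,t$ and $f:2^{\mathcal{E}}\to\mathbb{R}_+$ normalized, monotone nondecreasing and submodular. Then minimum $(s,t)$-cut with cost function $\hat f_{\mathrm{pf}}$ is dual to the polymatroidal network flow with capacities $\mathrm{cap}^{\mathrm{in}}_v=f|_{\delta^-(v)}$ and $\mathrm{cap}^{\mathrm{out}}_v=f|_{\delta^+(v)}$ at each node $v\in\mathcal{V}$; that is, the minimum of $\hat f_{\mathrm{pf}}(C)$ over $(s,t)$-cuts $C$ equals the maximum value of a polymatroidal $(s,t)$-flow with these capacities.
   Context: An $(s,t)$-cut is a set of edges whose removal disconnects all $s$-$t$ paths. For $C\subseteq\mathcal{E}$, let $\mathcal{P}_C$ be the family of all partitions $\Pi(C)=\{C^\Pi_v\}_{v\in\mathcal{V}}$ of $C$ obtained by assigning each edge $(u,w)\in C$ either to its tail $u$ or to its head $w$ ($C^\Pi_v$ is the set of edges assigned to $v$, possibly empty), and define $\hat f_{\mathrm{pf}}(C)=\min_{\Pi(C)\in\mathcal{P}_C}\sum_{v\in\mathcal{V}} f(C^\Pi_v)$. A polymatroidal $(s,t)$-flow is $\varphi:\mathcal{E}\to\mathbb{R}_+$ such that inflow equals outflow at every $v\notin\{s,t\}$ and, for every node $v$, $\sum_{e\in A}\varphi(e)\le \mathrm{cap}^{\mathrm{in}}_v(A)$ for all $A\subseteq\delta^-(v)$ (edges entering $v$) and $\sum_{e\in A}\varphi(e)\le \mathrm{cap}^{\mathrm{out}}_v(A)$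 for all $A\subseteq\delta^+(v)$ (edges leaving $v$); its value is the net outflow at $s$. $f|_A$ denotes the restriction of $f$ to subsets of $A$. *)

(* Defs.v *)
From HB Require Import structures.
From mathcomp Require Import all_boot all_order all_algebra.
From mathcomp Require Import reals.
Set Implicit Arguments. Unset Strict Implicit. Unset Printing Implicit Defensive.
Import Order.TTheory GRing.Theory Num.Theory.
Local Open Scope ring_scope.

Section Defs.
Variables (V E : finType) (tail head : E -> V).

Definition delta_in (v : V) : {set E} := [set e | head e == v].
Definition delta_out (v : V) : {set E} := [set e | tail e == v].

Definition adj_minus (C : {set E}) : rel V :=
  fun u w => [exists e, [&& e \notin C, tail e == u & head e == w]].

Definition is_st_cut (s t : V) (C : {set E}) : bool :=
  ~~ connect (adj_minus C) s t.

Variable R : realType.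
Variable f : {set E} -> R.

(* an assignment a : E -> bool sends edge e to its tail (true) or head (false);
   C^Pi_v = edges of C assigned to v *)
Definition part_block (C : {set E}) (a : {ffun E -> bool}) (v : V) : {set E} :=
  [set e in C | if a e then tail e == v else head e == v].

Definition part_cost (C : {set E}) (a : {ffun E -> bool}) : R :=
  \sum_(v : V) f (part_block C a v).

(* \hat f_pf (C) = min over all partitions of C (assignments; the values of
   a outside C are irrelevant) *)
Definition f_pf (C : {set E}) : R :=
  \big[Order.min/part_cost C [ffun => true]]_(a : {ffun E -> bool}) part_cost C a.

Definition normalized := f set0 = 0.
Definition nonneg_fun := forall A, 0 <= f A.
Definition monotone_fun := forall A B : {set E}, A \subset B -> f A <= f B.
Definition submodular := forall A B : {set E}, f (A :|: B) + f (A :&: B) <= f A + f B.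

Definition is_polymatroidal_flow (s t : V) (phi : E -> R) : Prop :=
  [/\ forall e, 0 <= phi e,
      forall v, v != s -> v != t ->
        \sum_(e in delta_in v) phi e = \sum_(e in delta_out v) phi e,
      forall v (A : {set E}), A \subset delta_in v -> \sum_(e in A) phi e <= f A
    & forall v (A : {set E}), A \subset delta_out v -> \sum_(e in A) phi e <= f A].

Definition flow_value (s : V) (phi : E -> R) : R :=
  \sum_(e in delta_out s) phi e - \sum_(e in delta_in s) phi e.

End Defs.

(* Main.v *)
Require Import Defs.
From HB Require Import structures.
From mathcomp Require Import all_boot all_order all_algebra.
From mathcomp Require Import reals.
From mathcomp Require Import lra.
Set Implicit Arguments. Unset Strict Implicit. Unset Printing Implicit Defensive.
Import Order.TTheory GRing.Theory Num.Theory.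
Local Open Scope ring_scope.

Section Main.
Variables (R : realType) (V E : finType) (tail head : E -> V) (s t : V)
  (f : {set E} -> R).
Hypotheses (st : s != t) (f0 : normalized f) (fge0 : nonneg_fun f)
  (fmono : monotone_fun f) (fsub : submodular f).

Local Notation flow := (is_polymatroidal_flow tail head f s t).
Local Notation val := (flow_value tail head s).

Lemma flow_across (phi : E -> R) (S : {set V}) : flow phi ->
  s \in S -> t \notin S ->
  val phi = \sum_(e | (tail e \in S) && (head e \notin S)) phi e
          - \sum_(e | (tail e \notin S) && (head e \in S)) phi e.
Proof.
case=> _ cons _ _ sS tS.
have H : val phi = \sum_(v in S) (\sum_(e in delta_out tail v) phi e
                                 - \sum_(e in delta_in head v) phi e).
  rewrite [RHS](bigD1 s) //= [X in _ + X]big1 ?addr0 // => v /andP [vS vs].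
  have vt : v != t by apply: contraNneq tS => <-.
  by rewrite cons // subrr.
rewrite H sumrB.
have Hout : \sum_(v in S) \sum_(e in delta_out tail v) phi e =
            \sum_(e | tail e \in S) phi e.
  rewrite [RHS](partition_big tail (fun v => v \in S)) //=.
  apply: eq_bigr => v vS; apply: eq_bigl => e; rewrite inE.
  by apply/idP/andP => [/eqP ee|[]//]; rewrite ee eqxx.
have Hin : \sum_(v in S) \sum_(e in delta_in head v) phi e =
            \sum_(e | head e \in S) phi e.
  rewrite [RHS](partition_big head (fun v => v \in S)) //=.
  apply: eq_bigr => v vS; apply: eq_bigl => e; rewrite inE.
  by apply/idP/andP => [/eqP ee|[]//]; rewrite ee eqxx.
rewrite Hout Hin.
have e1 : \sum_(e | tail e \in S) phi e =
  \sum_(e | (tail e \in S) && (head e \in S)) phi e +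
  \sum_(e | (tail e \in S) && (head e \notin S)) phi e.
  by rewrite (bigID (fun e => head e \in S)).
have e2 : \sum_(e | head e \in S) phi e =
  \sum_(e | (tail e \in S) && (head e \in S)) phi e +
  \sum_(e | (tail e \notin S) && (head e \in S)) phi e.
  rewrite (bigID (fun e => tail e \in S)) /=.
  by congr (_ + _); apply: eq_bigl => e; rewrite andbC.
by rewrite e1 e2 opprD addrACA subrr add0r.
Qed.

Lemma part_sum (C : {set E}) (a : {ffun E -> bool}) (phi : E -> R) :
  \sum_(e in C) phi e = \sum_v \sum_(e in part_block tail head C a v) phi e.
Proof.
rewrite (partition_big (fun e => if a e then tail e else head e) xpredT) //=.
apply: eq_bigr => v _; apply: eq_bigl => e; rewrite inE.
by case: (a e).
Qed.

Lemma weak_duality (phi : E -> R) (C : {set E}) :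
  flow phi -> is_st_cut tail head s t C -> val phi <= f_pf tail head f C.
Proof.
move=> fl cut.
have [phi0 _ capin capout] := fl.
set S := [set v | connect (adj_minus tail head C) s v].
have sS : s \in S by rewrite inE connect0.
have tS : t \notin S by rewrite inE.
have inC e : tail e \in S -> head e \notin S -> e \in C.
  rewrite !inE => ts; apply: contraNT => eC.
  apply: connect_trans ts _; apply: connect1.
  by apply/existsP; exists e; rewrite eC !eqxx.
rewrite (flow_across fl sS tS).
set C0 := [set e | (tail e \in S) && (head e \notin S)].
have le1 : \sum_(e | (tail e \in S) && (head e \notin S)) phi e
         - \sum_(e | (tail e \notin S) && (head e \in S)) phi e
         <= \sum_(e in C0) phi e.
  have -> : \sum_(e | (tail e \in S) && (head e \notin S)) phi e =
            \sum_(e in C0) phi e.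
    apply: eq_bigl => e. rewrite /C0 inE.  done.
  by rewrite lerBlDr lerDl; apply: sumr_ge0 => e _; exact: phi0.
apply: (le_trans le1).
have gen a : \sum_(e in C0) phi e <= part_cost tail head f C a.
  rewrite (part_sum C0 a) /part_cost; apply: ler_sum => v _.
  have sub : part_block tail head C0 a v \subset part_block tail head C a v.
    apply/subsetP => e; rewrite /part_block !inE => /andP [/andP [ts hs] ->].
    by rewrite andbT; apply: inC; rewrite inE.
  apply: le_trans (fmono sub).
  have [vS|vS] := boolP (v \in S).
    apply: (capout v); apply/subsetP => e; rewrite !inE => /andP [/andP [te he]].
    case: (a e) => // /eqP hv; move: he; rewrite hv; rewrite inE in vS; rewrite vS //.
  apply: (capin v); apply/subsetP => e; rewrite !inE => /andP [/andP [te he]].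
  case: (a e) => // /eqP hv; move: te; rewrite hv; rewrite inE in vS; rewrite (negbTE vS) //.
by rewrite /f_pf; apply: le_bigmin => [|a _]; apply: gen.
Qed.

Definition dl (g : E -> V) (v : V) : {set E} := [set e | g e == v].

Lemma sum_UI (phi : E -> R) (A B : {set E}) :
  \sum_(e in A :|: B) phi e + \sum_(e in A :&: B) phi e =
  \sum_(e in A) phi e + \sum_(e in B) phi e.
Proof.
rewrite (big_setID (A := A :|: B) A) /= (big_setID (A := B) A) /=.
have -> : (A :|: B) :&: A = A by apply/setIidPr; apply: subsetUl.
have -> : (A :|: B) :\: A = B :\: A by rewrite setDUl setDv set0U.
by rewrite [B :&: A]setIC -addrA [X in _ + X]addrC.
Qed.

Section Residual.
Variable phi : E -> R.
Hypothesis fl : flow phi.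

Lemma cap_g (g : E -> V) : (g = head) \/ (g = tail) ->
  forall (v : V) (A : {set E}), A \subset dl g v -> \sum_(e in A) phi e <= f A.
Proof. by case: fl => _ _ ci co [->|->]; [apply: ci | apply: co]. Qed.

Definition tight (g : E -> V) (v : V) (A : {set E}) : bool :=
  (A \subset dl g v) && (\sum_(e in A) phi e == f A).

Definition Tg (g : E -> V) (e1 e3 : E) : bool :=
  [forall A : {set E}, tight g (g e1) A ==> (e1 \in A) ==> (e3 \in A)].

Definition free (g : E -> V) (e : E) : bool :=
  [forall A : {set E}, tight g (g e) A ==> (e \notin A)].

Definition Tset (g : E -> V) (e1 : E) : {set E} := [set e3 | Tg g e1 e3 && (g e3 == g e1)].

Lemma Tg_refl (g : E -> V) (e : E) : Tg g e e.
Proof. by apply/forallP => A; apply/implyP => _; apply/implyP. Qed.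

Lemma free_Tg (g : E -> V) (e e3 : E) : free g e -> Tg g e e3.
Proof.
move=> /forallP fr; apply/forallP => A; apply/implyP => tA; apply/implyP => eA.
by move: (fr A); rewrite tA eA.
Qed.

Lemma tight_g (g : E -> V) (v : V) (A : {set E}) (e : E) : tight g v A -> e \in A -> g e = v.
Proof. by case/andP => /subsetP sA _ /sA; rewrite inE => /eqP. Qed.

Section Hub.
Variable g : E -> V.
Hypothesis hg : (g = head) \/ (g = tail).

Lemma tightUI (v : V) (A B : {set E}) : tight g v A -> tight g v B ->
  tight g v (A :|: B) /\ tight g v (A :&: B).
Proof.
move=> /andP [sA /eqP eA] /andP [sB /eqP eB].
have sU : A :|: B \subset dl g v by rewrite subUset sA.
have sI : A :&: B \subset dl g v by apply: subset_trans (subsetIl _ _) sA.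
have cU := cap_g hg sU; have cI := cap_g hg sI.
have := fsub A B; rewrite -eA -eB -sum_UI => hs.
by rewrite /tight sU sI /=; split; apply/eqP; apply/le_anti/andP; split => //; lra.
Qed.

Lemma tight0 (v : V) : tight g v set0.
Proof. rewrite /tight sub0set big_set0 /=. rewrite f0. by []. Qed.

Lemma Tset_tight (e1 : E) : ~~ free g e1 -> tight g (g e1) (Tset g e1).
Proof.
move=> /forallPn [A0]; rewrite negb_imply negbK => /andP [tA0 e1A0].
pose P := fun A => tight g (g e1) A && (e1 \in A).
have PA0 : P A0 by rewrite /P tA0.
case: (arg_minnP (fun A : {set E} => #|A|) PA0) => M /andP [tM e1M] Mmin.
suff -> : Tset g e1 = M by [].
apply/setP => e3; rewrite inE; apply/idP/idP.
  by case/andP => /forallP /(_ M); rewrite tM e1M.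
move=> e3M; rewrite (tight_g tM e3M) eqxx andbT.
apply/forallP => A; apply/implyP => tA; apply/implyP => e1A.
have [_ tI] := tightUI tM tA.
have PI : P (M :&: A) by rewrite /P tI inE e1M e1A.
have := Mmin _ PI => cle.
have : M :&: A = M.
  apply/eqP; rewrite eqEcard subsetIl cle andbT //.
by move=> MA; move: e3M; rewrite -MA inE => /andP [].
Qed.

Lemma bigcup_tight (v : V) (P : pred E) :
  (forall e, P e -> ~~ free g e /\ g e = v) ->
  tight g v (\bigcup_(e | P e) Tset g e).
Proof.
move=> HP; apply: (big_ind (tight g v)) => [|A B tA tB|e Pe].
- exact: tight0.
- by have [] := tightUI tA tB.
- by have [nf <-] := HP e Pe; exact: Tset_tight.
Qed.

Lemma block_bound (v : V) (B K : {set E}) : tight g v K -> B \subset K ->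
  (forall e, e \in K -> e \notin B -> phi e = 0) ->
  f B <= \sum_(e in B) phi e.
Proof.
case/andP=> _ /eqP eK sBK z.
apply: le_trans (fmono sBK) _; rewrite -eK (big_setID B) /=.
have -> : K :&: B = B by apply/setIidPr.
rewrite [X in _ + X]big1 ?addr0 // => e; rewrite inE => /andP [eB eK'].
exact: z.
Qed.

End Hub.

Definition src (z : E * bool) : V := if z.2 then tail z.1 else head z.1.
Definition tgt (z : E * bool) : V := if z.2 then head z.1 else tail z.1.
Definition valid (z : E * bool) : bool := z.2 || (0 < phi z.1).

Definition step : rel (E * bool) := fun x y =>
  [&& tgt x == src y, valid y &
  (if x.2 then (if y.2 then free head x.1 && free tail y.1 else Tg head x.1 y.1)
   else (if y.2 then Tg tail y.1 x.1 else true))].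

Definition start (z : E * bool) : bool :=
  [&& src z == s, valid z & z.2 ==> free tail z.1].
Definition fin (z : E * bool) : bool :=
  [&& tgt z == t, valid z & z.2 ==> free head z.1].

Definition augmenting : bool :=
  [exists x, exists y, [&& start x, fin y & connect step x y]].

Definition Reach (z : E * bool) : bool := [exists x, start x && connect step x z].

Lemma reach_step x y : Reach x -> step x y -> Reach y.
Proof.
case/existsP=> x0 /andP [sx0 cx] sxy; apply/existsP; exists x0.
by rewrite sx0 (connect_trans cx (connect1 sxy)).
Qed.

Lemma reach_start x : start x -> Reach x.
Proof. by move=> sx; apply/existsP; exists x; rewrite sx connect0. Qed.

Lemma path_valid x p : path step x p -> valid x -> valid (last x p).
Proof.
elim: p x => [|y p IH] x //= /andP [sxy py] _; apply: IH => //.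
by case/and3P: sxy.
Qed.

Lemma reach_valid z : Reach z -> valid z.
Proof.
case/existsP=> x /andP [sx /connectP [p px ->]]; apply: path_valid => //.
by case/and3P: sx.
Qed.

Definition S : {set V} :=
  [set v | [|| v == s,
   [exists e, [&& head e == v, Reach (e, true) & free head e]] |
   [exists e, (tail e == v) && Reach (e, false)]]].

Lemma S_power v : v \in S ->
  (forall e2, tail e2 = v -> free tail e2 -> Reach (e2, true)) /\
  (forall e3, head e3 = v -> 0 < phi e3 -> Reach (e3, false)).
Proof.
rewrite inE => /or3P [/eqP ->|/existsP [e /and3P [/eqP he re fe]]|
                      /existsP [e /andP [/eqP te re]]].
- split=> e te fe; apply: reach_start; rewrite /start /src /valid /=.
    by rewrite te eqxx fe.
  by rewrite te eqxx fe.
- split=> e2 he2 fe2; apply: (reach_step re).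
    by rewrite /step /tgt /src /valid /= he he2 eqxx fe fe2.
  by rewrite /step /tgt /src /valid /= he he2 eqxx fe2 /= free_Tg.
- split=> e2 he2 fe2; apply: (reach_step re).
    by rewrite /step /tgt /src /valid /= te he2 eqxx free_Tg.
  by rewrite /step /tgt /src /valid /= te he2 eqxx fe2.
Qed.

Lemma sS : s \in S.
Proof. by rewrite inE eqxx. Qed.

Lemma tS : ~~ augmenting -> t \notin S.
Proof.
move=> na; rewrite inE negb_or eq_sym st /= negb_or; apply/andP; split.
  apply/existsPn => e; apply/negP => /and3P [/eqP he re fe].
  case/existsP: re => x /andP [sx cx]; move/negP: na; apply.
  apply/existsP; exists x; apply/existsP; exists (e, true).
  by rewrite sx cx /fin /tgt /valid /= he eqxx fe.
apply/existsPn => e; apply/negP => /andP [/eqP te re].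
have ve := reach_valid re.
case/existsP: re => x /andP [sx cx]; move/negP: na; apply.
apply/existsP; exists x; apply/existsP; exists (e, false).
by rewrite sx cx /fin /tgt /= te eqxx ve.
Qed.

Definition Cut : {set E} := [set e | (tail e \in S) && (head e \notin S)].

Lemma cut_is_cut : ~~ augmenting -> is_st_cut tail head s t Cut.
Proof.
move=> na; rewrite /is_st_cut; apply/negP => /connectP [p pp tl].
suff : last s p \in S by rewrite -tl (negbTE (tS na)).
elim: p s sS pp {tl} => [|w p IH] u uS //= /andP [auw pw]; apply: IH pw.
case/existsP: auw => e /and3P [eC /eqP te /eqP he].
by move: eC; rewrite inE negb_and negbK te uS -he.
Qed.

Definition K (w : V) : {set E} :=
  \bigcup_(e1 | [&& head e1 == w, Reach (e1, true) & ~~ free head e1]) Tset head e1.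
Definition L (u : V) : {set E} :=
  \bigcup_(e | [&& tail e == u, ~~ Reach (e, true) & ~~ free tail e]) Tset tail e.
Definition asg : {ffun E -> bool} := [ffun e => e \notin K (head e)].

Lemma K_tight w : tight head w (K w).
Proof.
apply: bigcup_tight; first by left.
by move=> e /and3P [/eqP -> _ ->].
Qed.

Lemma L_tight u : tight tail u (L u).
Proof.
apply: bigcup_tight; first by right.
by move=> e /and3P [/eqP -> _ ->].
Qed.

Lemma K_reach w e : e \in K w -> 0 < phi e -> Reach (e, false).
Proof.
case/bigcupP => e1 /and3P [_ r1 _]; rewrite inE => /andP [T1 /eqP h1] pe.
apply: (reach_step r1).
by rewrite /step /tgt /src /valid /= h1 eqxx pe T1.
Qed.

Lemma K_head w e : e \in K w -> head e = w.
Proof. by move=> eK; apply: (tight_g (K_tight w) eK). Qed.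

Lemma L_tail u e : e \in L u -> tail e = u.
Proof. by move=> eL; apply: (tight_g (L_tight u) eL). Qed.

Lemma phi_ge0 e : 0 <= phi e.
Proof. by case: fl. Qed.

Lemma no_back e : tail e \notin S -> head e \in S -> phi e = 0.
Proof.
move=> tNS hS; apply/eqP; rewrite eq_le phi_ge0 andbT leNgt; apply/negP => pe.
have [_ /(_ e erefl pe) re] := S_power hS.
move/negP: tNS; apply; rewrite inE; apply/orP; right; apply/orP; right.
by apply/existsP; exists e; rewrite eqxx re.
Qed.

Lemma val_cut : ~~ augmenting -> val phi = \sum_(e in Cut) phi e.
Proof.
move=> na; rewrite (flow_across fl sS (tS na)).
rewrite [X in _ - X]big1 ?subr0; last by move=> e /andP [a b]; apply: no_back.
apply: eq_bigl => e. rewrite [in RHS]inE. done.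
Qed.

Lemma block_le v : ~~ augmenting ->
  f (part_block tail head Cut asg v) <= \sum_(e in part_block tail head Cut asg v) phi e.
Proof.
move=> na.
have [vS|vS] := boolP (v \in S).
- apply: (@block_bound tail v _ _ (L_tight v)).
  + apply/subsetP => e; rewrite inE => /andP [eC].
    move: (eC); rewrite inE => /andP [teS heS].
    rewrite /asg ffunE; case: ifP => [eK /eqP tv|_ /eqP hv]; last first.
      by move: heS; rewrite hv vS.
    have nre : ~~ Reach (e, true).
      apply/negP => re; move/negP: eK; apply.
      have nf : ~~ free head e.
        apply/negP => fe; move/negP: heS; apply; rewrite inE; apply/orP; right.
        by apply/orP; left; apply/existsP; exists e; rewrite eqxx re fe.
      apply/bigcupP; exists e; first by rewrite eqxx re nf.
      by rewrite inE Tg_refl eqxx.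
    have nf : ~~ free tail e.
      apply/negP => fe; move/negP: nre; apply.
      by have [H _] := S_power vS; apply: H.
    apply/bigcupP; exists e; first by rewrite tv eqxx nre nf.
    by rewrite inE Tg_refl eqxx.
  + move=> q qL qB; apply/eqP; rewrite eq_le phi_ge0 andbT leNgt.
    apply/negP => pq.
    case/bigcupP: (qL) => e /and3P [/eqP te nre _]; rewrite inE => /andP [Tq /eqP tq].
    have nrq : ~~ Reach (q, false).
      apply/negP => rq; move/negP: nre; apply; apply: (reach_step rq).
      by rewrite /step /tgt /src /valid /= tq eqxx Tq.
    have tqv : tail q = v by rewrite tq.
    have hqS : head q \notin S.
      apply/negP => hS; move/negP: nrq; apply.
      by have [_ H] := S_power hS; apply: H.
    have qC : q \in Cut by rewrite inE tqv vS hqS.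
    move/negP: qB; apply; rewrite inE qC /= /asg ffunE.
    case: ifP => [_|/negbFE qK]; first by rewrite tqv.
    by case/negP: nrq; apply: (K_reach qK pq).
- apply: (@block_bound head v _ _ (K_tight v)).
  + apply/subsetP => e; rewrite inE => /andP [eC].
    move: (eC); rewrite inE => /andP [teS heS].
    rewrite /asg ffunE; case: ifP => [_ /eqP tv|/negbFE eK /eqP hv].
      by move: teS; rewrite tv (negbTE vS).
    by rewrite -hv.
  + move=> e eK eB; apply/eqP; rewrite eq_le phi_ge0 andbT leNgt.
    apply/negP => pe.
    have re := K_reach eK pe.
    have he := K_head eK.
    have teS : tail e \in S.
      by rewrite inE; apply/orP; right; apply/orP; right; apply/existsP; exists e; rewrite eqxx re.
    have eC : e \in Cut by rewrite inE teS he vS.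
    move/negP: eB; apply; rewrite inE eC /= /asg ffunE he eK /=.
    by [].
Qed.

Lemma cut_le : ~~ augmenting -> f_pf tail head f Cut <= val phi.
Proof.
move=> na; rewrite (val_cut na) (part_sum Cut asg).
apply: le_trans (bigmin_le _ asg _) _.
by apply: ler_sum => v _; apply: block_le.
Qed.

Definition sg (z : E * bool) : R := if z.2 then 1 else -1.
Definition dir (Ls : seq (E * bool)) (e : E) : R :=
  \sum_(z <- Ls) (if z.1 == e then sg z else 0).
Definition sgA (A : {set E}) (z : E * bool) : R := if z.1 \in A then sg z else 0.
Definition fwdA (A : {set E}) (z : E * bool) : bool := z.2 && (z.1 \in A).
Definition bwdA (A : {set E}) (z : E * bool) : bool := ~~ z.2 && (z.1 \in A).

Lemma sum_dir (A : {set E}) Ls :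
  \sum_(e in A) dir Ls e = \sum_(z <- Ls) sgA A z.
Proof.
rewrite /dir exchange_big /=; apply: eq_bigr => z _; rewrite /sgA.
have [zA|zA] := boolP (z.1 \in A).
  rewrite (bigD1 z.1) //= eqxx big1 ?addr0 // => e /andP [_ ne].
  by rewrite eq_sym (negbTE ne).
apply: big1 => e eA; case: eqP => // ze; by move: zA; rewrite ze eA.
Qed.

Lemma step_in (A : {set E}) v x y : tight head v A -> step x y -> fwdA A x -> bwdA A y.
Proof.
move=> tA /and3P [_ _]; case: x => e1 [] //= H /andP [_ e1A].
have he1 := tight_g tA e1A.
rewrite -he1 in tA.
case: y H => e3 [] /=.
  by case/andP => /forallP /(_ A); rewrite tA e1A.
by move/forallP/(_ A); rewrite tA e1A.
Qed.

Lemma step_out (A : {set E}) v x y : tight tail v A -> step x y -> fwdA A y -> bwdA A x.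
Proof.
move=> tA /and3P [_ _]; case: y => e2 [] //= H /andP [_ e2A].
have he2 := tight_g tA e2A.
rewrite -he2 in tA.
case: x H => e' [] /=.
  by case/andP => _ /forallP /(_ A); rewrite tA e2A.
by move/forallP/(_ A); rewrite tA e2A.
Qed.

Lemma sgA_le (A : {set E}) z : sgA A z <= (fwdA A z)%:R.
Proof. by case: z => e [] /=; rewrite /sgA /fwdA /sg /=; case: (e \in A) => //=; lra. Qed.

Lemma sgA_bwd (A : {set E}) z : bwdA A z -> sgA A z = -1.
Proof. by case: z => e [] //= /andP [_ eA]; rewrite /sgA eA. Qed.

Lemma path_in (A : {set E}) v : tight head v A -> forall x p,
  path step x p -> ~~ fwdA A (last x p) ->
  \sum_(z <- p) sgA A z <= - (fwdA A x)%:R.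
Proof.
move=> tA x p; elim: p x => [|y p IH] x /=.
  by move=> _ nf; rewrite big_nil (negbTE nf) oppr0.
case/andP => sxy py nl; rewrite big_cons.
have := IH y py nl => H.
have [fx|fx] := boolP (fwdA A x).
  have by' := step_in tA sxy fx.
  rewrite (sgA_bwd by'); move: H; rewrite /fwdA; case/andP: by' => /negbTE -> _ /=.
  by rewrite oppr0 => H; lra.
rewrite mulr0n oppr0; have := sgA_le A y; lra.
Qed.

Lemma sgA_le2 (A : {set E}) z : sgA A z + (bwdA A z)%:R <= (fwdA A z)%:R.
Proof.
case: z => e [] /=; rewrite /sgA /fwdA /bwdA /sg /=; case: (e \in A) => //=;
rewrite ?mulr1n ?mulr0n; lra.
Qed.

Lemma path_out (A : {set E}) v : tight tail v A -> forall x p,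
  path step x p -> \sum_(z <- p) sgA A z <= (bwdA A x)%:R.
Proof.
move=> tA x p; elim: p x => [|y p IH] x /=; first by rewrite big_nil.
case/andP => sxy py; rewrite big_cons.
have := IH y py => H.
have H2 := sgA_le2 A y.
have H3 : (fwdA A y)%:R <= (bwdA A x)%:R :> R.
  have [fy|fy] := boolP (fwdA A y); last by rewrite mulr0n.
  by rewrite (step_out tA sxy fy).
lra.
Qed.

Lemma telescope v x p : path step x p ->
  \sum_(z <- x :: p) ((tgt z == v)%:R - (src z == v)%:R : R) =
  (tgt (last x p) == v)%:R - (src x == v)%:R.
Proof.
elim: p x => [|y p IH] x /=; first by rewrite big_cons big_nil addr0.
case/andP => /and3P [/eqP txy _ _] py.
rewrite big_cons IH // txy; lra.
Qed.

Lemma dir_cons v Ls :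
  \sum_(e in dl head v) dir Ls e - \sum_(e in dl tail v) dir Ls e =
  \sum_(z <- Ls) ((tgt z == v)%:R - (src z == v)%:R : R).
Proof.
rewrite !sum_dir -sumrB; apply: eq_bigr => z _.
rewrite /sgA /tgt /src /sg !inE; case: z => e [] /=;
by case: (head e == v); case: (tail e == v) => /=; lra.
Qed.

Lemma path_all_valid x p : path step x p -> valid x -> all valid (x :: p).
Proof.
elim: p x => [|y p IH] x /=; first by move=> _ ->.
case/andP => /and3P [_ vy _] py ->; exact: IH.
Qed.

Lemma dir_neg Ls e : all valid Ls -> dir Ls e < 0 -> 0 < phi e.
Proof.
move=> av; apply: contraTT; rewrite -leNgt => npe.
rewrite /dir big_seq -leNgt; apply: sumr_ge0 => z zL.
case: eqP => // ze; case: z ze zL => e' [] /= -> zL; rewrite /sg //.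
by move/allP: av => /(_ _ zL); rewrite /valid /= ltNge npe.
Qed.

Lemma improve : augmenting -> exists phi', flow phi' /\ val phi < val phi'.
Proof.
case/existsP => x /existsP [y /and3P [sx fy /connectP [p pp ly]]].
set Ls := x :: p.
have vx : valid x by case/and3P: sx.
have av : all valid Ls := path_all_valid pp vx.
have fl' : fin (last x p) by rewrite -ly.
have tin v A : tight head v A -> \sum_(e in A) dir Ls e <= 0.
  move=> tA; rewrite sum_dir big_cons.
  have nl : ~~ fwdA A (last x p).
    case/and3P: fl' => _ _; rewrite /fwdA; case: (last x p) => e [] //= fe.
    apply/negP => eA; move/forallP: fe => /(_ A).
    have hv := tight_g tA eA; rewrite -hv in tA; by rewrite tA eA.
  have := path_in tA pp nl; have := sgA_le A x; lra.
have tout v A : tight tail v A -> \sum_(e in A) dir Ls e <= 0.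
  move=> tA; rewrite sum_dir big_cons.
  have nf : ~~ fwdA A x.
    case/and3P: sx => _ _; rewrite /fwdA; case: (x) => e [] //= fe.
    apply/negP => eA; move/forallP: fe => /(_ A).
    have hv := tight_g tA eA; rewrite -hv in tA; by rewrite tA eA.
  have := path_out tA pp; have := sgA_le2 A x; rewrite (negbTE nf) mulr0n; lra.
set D := \sum_e `|dir Ls e|.
have D0 : 0 <= D by apply: sumr_ge0.
have absA (A : {set E}) : `|\sum_(e in A) dir Ls e| <= D.
  apply: le_trans (ler_norm_sum _ _ _) _.
  rewrite /D [X in _ <= X](bigID (mem A)) /= lerDl; apply: sumr_ge0 => *; exact: normr_ge0.
have abse e : `|dir Ls e| <= D.
  by rewrite /D (bigD1 e) //= lerDl; apply: sumr_ge0 => *; exact: normr_ge0.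
set m1 := \big[Order.min/1]_(A : {set E})
  (if 0 < f A - \sum_(e in A) phi e then f A - \sum_(e in A) phi e else 1).
set m2 := \big[Order.min/1]_(e : E) (if 0 < phi e then phi e else 1).
set m := Order.min m1 m2.
have m_pos : 0 < m.
  rewrite lt_min; apply/andP; split; apply: lt_bigmin => // i _; by case: ifP.
have m_slack (A : {set E}) : 0 < f A - \sum_(e in A) phi e -> m <= f A - \sum_(e in A) phi e.
  move=> sA; rewrite ge_min; apply/orP; left.
  by apply: le_trans (bigmin_le _ A _) _; rewrite sA.
have m_phi e : 0 < phi e -> m <= phi e.
  move=> pe; rewrite ge_min; apply/orP; right.
  by apply: le_trans (bigmin_le _ e _) _; rewrite pe.
set eps := m / (D + 1).
have D1 : 0 < D + 1 by lra.
have eps_pos : 0 < eps by apply: divr_gt0.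
have eps_b r : `|r| <= D -> eps * r <= m.
  move=> rD; apply: le_trans (_ : eps * `|r| <= m).
    by rewrite ler_pM2l // ler_norm.
  rewrite /eps mulrAC ler_pdivrMr // ler_pM2l //; lra.
pose phi' := fun e => phi e + eps * dir Ls e.
have sum' (A : {set E}) : \sum_(e in A) phi' e = \sum_(e in A) phi e + eps * \sum_(e in A) dir Ls e.
  by rewrite big_split /= mulr_sumr.
have capg (g : E -> V) : (g = head) \/ (g = tail) ->
    forall v (A : {set E}), A \subset dl g v -> \sum_(e in A) phi' e <= f A.
  move=> hg v A sA; rewrite sum'.
  have cA := cap_g hg sA.
  have [eq|neq] := boolP (\sum_(e in A) phi e == f A).
    have tA : tight g v A by rewrite /tight sA eq.
    have : \sum_(e in A) dir Ls e <= 0 by case: hg tA => -> ?; [apply: (tin v) | apply: (tout v)].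
    move=> H; have : eps * \sum_(e in A) dir Ls e <= 0 by rewrite pmulr_rle0.
    move/eqP: eq; lra.
  have sl : 0 < f A - \sum_(e in A) phi e by rewrite subr_gt0 lt_neqAle neq cA.
  have := m_slack A sl; have := eps_b _ (absA A); lra.
have telv v : \sum_(e in dl head v) dir Ls e - \sum_(e in dl tail v) dir Ls e =
              (t == v)%:R - (s == v)%:R.
  rewrite dir_cons telescope //.
  by case/and3P: fl' => /eqP -> _ _; case/and3P: sx => /eqP -> _ _.
have flow' : flow phi'.
  split.
  - move=> e; rewrite /phi'.
    have [dn|dp] := ltP (dir Ls e) 0.
      have pe := dir_neg av dn.
      have := m_phi e pe.
      have := eps_b (- dir Ls e); rewrite normrN => /(_ (abse e)); lra.
    have := phi_ge0 e; have : 0 <= eps * dir Ls e by apply: mulr_ge0 => //; exact: ltW.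
    lra.
  - move=> v vs vt.
    have [_ cons _ _] := fl.
    rewrite (sum' (delta_in head v)) (sum' (delta_out tail v)) (cons v vs vt).
    have := telv v; rewrite eq_sym (negbTE vt) eq_sym (negbTE vs) subrr.
    rewrite /dl => /eqP; rewrite subr_eq0 => /eqP H.
    by rewrite [delta_in head v]/delta_in [delta_out tail v]/delta_out H.
  - by move=> v A sA; apply: (capg head (or_introl erefl) v A sA).
  - by move=> v A sA; apply: (capg tail (or_intror erefl) v A sA).
exists phi'; split => //.
rewrite /flow_value (sum' (delta_out tail s)) (sum' (delta_in head s)).
have := telv s; rewrite eqxx eq_sym (negbTE st) /dl.
rewrite [delta_in head s]/delta_in [delta_out tail s]/delta_out.
move=> H.
have : eps * (\sum_(e in [set e | tail e == s]) dir Ls e -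
        \sum_(e in [set e | head e == s]) dir Ls e) = eps.
  by rewrite -(opprB (\sum_(e in _) _)) H /= mulr0n mulr1n sub0r opprK mulr1.
rewrite mulrBr => H2; lra.
Qed.
End Residual.

End Main.

From mathcomp Require Import classical_sets boolp topology normedtype derive.
Import numFieldNormedType.Exports.

Section Exist.
Local Open Scope classical_set_scope.
Variables (R : realType) (V E : finType) (tail head : E -> V) (s t : V)
  (f : {set E} -> R).
Hypothesis fge0 : nonneg_fun f.

Local Notation flow := (is_polymatroidal_flow tail head f s t).
Local Notation val := (flow_value tail head s).

Definition ph (x : 'rV[R]_#|E|) : E -> R := fun e => x ord0 (enum_rank e).
Definition rw (phi : E -> R) : 'rV[R]_#|E| := \row_i phi (enum_val i).

Lemma ph_rw phi : ph (rw phi) = phi.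
Proof. by apply: funext => e; rewrite /ph /rw mxE enum_rankK. Qed.

Lemma cont_sum (P : pred E) :
  continuous (fun x : 'rV[R]_#|E| => \sum_(e | P e) ph x e).
Proof.
suff gen r : continuous (fun x : 'rV[R]_#|E| => \sum_(e <- r | P e) ph x e) by exact: gen.
elim: r => [|e r IH].
  rewrite (_ : (fun x : 'rV[R]_#|E| => \sum_(e <- [::] | P e) ph x e) = fun _ => 0); first exact: cst_continuous.
  by apply: funext => x; rewrite big_nil.
rewrite (_ : (fun x : 'rV[R]_#|E| => \sum_(e0 <- e :: r | P e0) ph x e0) = fun x => (if P e then ph x e else 0) + \sum_(e <- r | P e) ph x e).
  move=> y; apply: (continuousD (f := fun x : 'rV[R]_#|E| => if P e then ph x e else 0)) => //.
  case: (P e); last exact: cst_continuous.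
  exact: coord_continuous.
  exact: IH.
by apply: funext => x; rewrite big_cons; case: (P e); rewrite ?add0r.
Qed.

Lemma closed_leL (L : 'rV[R]_#|E| -> R) (c : R) :
  continuous L -> closed [set x | L x <= c].
Proof.
move=> cL; rewrite (_ : [set x | L x <= c] = L @^-1` [set r | r <= c]) //.
apply: preimage_closed; last exact: closed_le.
by move=> y _; exact: cL.
Qed.

Lemma contB (L1 L2 : 'rV[R]_#|E| -> R) :
  continuous L1 -> continuous L2 -> continuous (fun x => L1 x - L2 x).
Proof. by move=> c1 c2 y; apply: (continuousB (c1 y) (c2 y)). Qed.

Definition Aflow : set 'rV[R]_#|E| := [set x | flow (ph x)].

Lemma Aflow_closed : closed Aflow.
Proof.
pose C1 := \bigcap_(e in [set: E]) [set x : 'rV[R]_#|E| | 0 - ph x e <= 0].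
pose C2 := \bigcap_(v in [set v | v != s /\ v != t])
  ([set x : 'rV[R]_#|E| | \sum_(e in delta_in head v) ph x e - \sum_(e in delta_out tail v) ph x e <= 0]
   `&` [set x | \sum_(e in delta_out tail v) ph x e - \sum_(e in delta_in head v) ph x e <= 0]).
pose C3 := \bigcap_(p in [set p : V * {set E} | p.2 \subset delta_in head p.1])
  [set x : 'rV[R]_#|E| | \sum_(e in p.2) ph x e <= f p.2].
pose C4 := \bigcap_(p in [set p : V * {set E} | p.2 \subset delta_out tail p.1])
  [set x : 'rV[R]_#|E| | \sum_(e in p.2) ph x e <= f p.2].
have -> : Aflow = C1 `&` C2 `&` C3 `&` C4.
  apply/seteqP; split => x.
    case=> H1 H2 H3 H4; split; [split; [split|]|].
    - by move=> e _ /=; rewrite sub0r oppr_le0.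
    - move=> v [vs vt] /=; rewrite (H2 v) ?subrr //; exact/negP/negP.
    - by case=> v A /= sA; apply: (H3 v).
    - by case=> v A /= sA; apply: (H4 v).
  case=> [[[H1 H2] H3] H4]; split.
  - by move=> e; have := H1 e I; rewrite /= sub0r oppr_le0.
  - move=> v vs vt; have [/= a b] := H2 v (conj vs vt).
    by apply/eqP; rewrite eq_le -subr_le0 a -subr_le0 b.
  - by move=> v A sA; apply: (H3 (v, A)).
  - by move=> v A sA; apply: (H4 (v, A)).
apply: closedI; first apply: closedI; first apply: closedI.
- apply: closed_bigI => e _; apply: closed_leL; apply: contB.
    exact: cst_continuous.
  exact: coord_continuous.
- apply: closed_bigI => v _; apply: closedI; apply: closed_leL; apply: contB;
  exact: cont_sum.
- by apply: closed_bigI; case=> v A _; apply: closed_leL; exact: cont_sum.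
- by apply: closed_bigI; case=> v A _; apply: closed_leL; exact: cont_sum.
Qed.

Lemma Aflow_bounded : bounded_set Aflow.
Proof.
pose B := \sum_e f [set e]%SET.
have B0 : 0 <= B by apply: sumr_ge0 => e _; exact: fge0.
have fB e : f [set e]%SET <= B.
  rewrite /B (bigD1 e) //= lerDl; apply: sumr_ge0 => *; exact: fge0.
exists B; split; first exact: num_real.
move=> M BM x [H1 _ _ H4].
apply: le_trans (ltW BM).
rewrite [leLHS]/Num.norm /= mx_normrE; apply: bigmax_le => // -[i j] _ /=.
have -> : x i j = ph x (enum_val j) by rewrite /ph enum_valK (ord1 i).
rewrite ger0_norm //; apply: le_trans (fB _).
have := H4 (tail (enum_val j)) [set enum_val j]%SET.
rewrite big_set1; apply.
by rewrite finset.sub1set inE.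
Qed.

Lemma exists_max_flow :
  exists phi, flow phi /\ forall phi', flow phi' -> val phi' <= val phi.
Proof.
have A0 : Aflow !=set0.
  exists (rw (fun _ => 0)); rewrite /Aflow /= ph_rw; split.
  - by [].
  - by move=> v _ _; rewrite !big1.
  - by move=> v A _; rewrite big1 //; exact: fge0.
  - by move=> v A _; rewrite big1 //; exact: fge0.
have cA : compact Aflow := bounded_closed_compact Aflow_bounded Aflow_closed.
have cv : {within Aflow, continuous (fun x => val (ph x))}.
  apply: continuous_subspaceT; apply: contB; exact: cont_sum.
have [c cA' cmax] := EVT_max_rV A0 cA cv.
exists (ph c); split; first by rewrite in_setE in cA'.
move=> phi' fl'; rewrite -(ph_rw phi'); apply: cmax.
by rewrite in_setE /Aflow /= ph_rw.
Qed.

End Exist.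

Theorem lemma6 (R : realType) (V E : finType) (tail head : E -> V) (s t : V)
  (f : {set E} -> R) :
  s != t ->
  normalized f -> nonneg_fun f -> monotone_fun f -> submodular f ->
  exists (C : {set E}) (phi : E -> R),
    [/\ is_st_cut tail head s t C,
        (forall C' : {set E}, is_st_cut tail head s t C' ->
           f_pf tail head f C <= f_pf tail head f C'),
        is_polymatroidal_flow tail head f s t phi,
        (forall phi' : E -> R, is_polymatroidal_flow tail head f s t phi' ->
           flow_value tail head s phi' <= flow_value tail head s phi)
      & f_pf tail head f C = flow_value tail head s phi].
Proof.
move=> st f0 fge0 fmono fsub.
have [phi [fl mx]] := exists_max_flow tail head s t fge0.
have na : ~~ augmenting tail head s t f phi.
  apply/negP => aug.
  have [phi' [fl' lt]] := improve st fl aug.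
  by have := mx _ fl'; rewrite leNgt lt.
have cut := cut_is_cut st na.
have le1 := cut_le st f0 fmono fsub fl na.
have le2 := weak_duality fmono fl cut.
exists (Cut tail head s f phi), phi; split => //.
- move=> C' cut'; exact: (le_trans le1 (weak_duality fmono fl cut')).
- by apply/le_anti; rewrite le1 le2.
Qed.
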